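(* Assume the Elliott–Halberstam Conjecture, fix $\delta>0$ and a constant $C\ge 3$. Then $g_n-g_n(n^{1+\delta}) = o(1/n)$ for all but $\ll x/\log^C x$ natural numbers $n\le x$; that is, for every $\epsilon>0$, the number of natural numbers $n\le x$ with $|g_n-g_n(n^{1+\delta})|>\epsilon/n$ is $\ll x/\log^C x$.
   Context: Elliott–Halberstam Conjecture: for any $\delta'>0$ and any $A>0$, $$\sum_{k<x^{1-\delta'}} \max_{(l,k)=1}\max_{y\le x}\left|\pi(y,k,l)-\frac{\operatorname{li} y}{\phi(k)}\right| \ll_{\delta',A} \frac{x}{\log^A x},$$ where $\pi(y,k,l)$ is the number of primes $p\le y$ with $p\equiv l \pmod k$ and $\operatorname{li} y=\int_2^y dt/\log t$. For a natural number $n$ and real $x$, $g_n(x) = \sum_{q\le x,\ q\text{ prime},\ q\equiv 1 (n)} 1/q - \sum_{q\le x,\ q\text{ prime},\ q\equiv -1 (n)} 1/q$, and $g_n=\lim_{x\to\infty}g_n(x)$. *)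

(* Defs.v *)
From Stdlib Require Import Bool Reals ZArith Znumtheory List Arith Lia.
From Coquelicot Require Import Coquelicot.
Open Scope R_scope.

Definition primeb (p : nat) : bool :=
  if prime_dec (Z.of_nat p) then true else false.

Definition nats_le (y : R) : list nat :=
  filter (fun m => if Rle_dec (INR m) y then true else false)
         (seq 0 (Z.to_nat (up y))).

Definition sumR (l : list nat) (f : nat -> R) : R :=
  fold_right (fun m acc => f m + acc) 0 l.

(* congruence a = b (mod k) for naturals, k >= 0 (k = 0: equality) *)
Definition congb (a b k : nat) : bool := Nat.eqb (a mod k) (b mod k).

Definition pi_ap (y : R) (k l : nat) : nat :=
  length (filter (fun p => primeb p && congb p l k) (nats_le y)).

Definition li (y : R) : R := RInt (fun t => / ln t) 2 y.

Definition phi (k : nat) : nat :=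
  length (filter (fun a => Nat.eqb (Nat.gcd a k) 1) (seq 1 k)).

(* The maxima over l (coprime to k) and
   over y (2 <= y <= x) are expressed by quantifying over all choice
   functions k |-> l k, k |-> y k: the sum of the maxima is bounded by B
   iff every such choice yields a sum bounded by B. *)
Definition EH : Prop :=
  forall delta' A : R, 0 < delta' -> 0 < A ->
  exists K x0 : R, forall x : R, x0 <= x ->
  forall (lsel : nat -> nat) (ysel : nat -> R),
    (forall k, Nat.gcd (lsel k) k = 1%nat) ->
    (forall k, 2 <= ysel k <= x) ->
    sumR (filter (fun k => if Rlt_dec (INR k) (Rpower x (1 - delta')) then true else false)
                 (seq 1 (Z.to_nat (up (Rpower x (1 - delta'))))))
         (fun k => Rabs (INR (pi_ap (ysel k) k (lsel k)) - li (ysel k) / INR (phi k)))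
    <= K * x / Rpower (ln x) A.

Definition gx (n : nat) (x : R) : R :=
  sumR (filter (fun q => primeb q && congb q 1 n) (nats_le x)) (fun q => / INR q)
  - sumR (filter (fun q => primeb q && congb (S q) 0 n) (nats_le x)) (fun q => / INR q).

(* g_n = lim_{x -> oo} g_n(x) (g_n(x) is a step function with jumps at
   integers, so the limit along integers is the limit as x -> oo) *)
Definition g (n : nat) : R := real (Lim_seq (fun m => gx n (INR m))).

Definition exceptional_count (delta eps x : R) : nat :=
  length (filter (fun n =>
     Nat.ltb 0 n &&
     (if Rlt_dec (eps / INR n) (Rabs (g n - gx n (Rpower (INR n) (1 + delta))))
      then true else false))
   (nats_le x)).

(* Main.v *)
Require Import Defs.
From Stdlib Require Import Bool Reals Lra Lia Arith List ZArith ClassicalEpsilon Classical.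
From Coquelicot Require Import Coquelicot.
Open Scope R_scope.


Lemma sumR_app l1 l2 f : sumR (l1 ++ l2) f = sumR l1 f + sumR l2 f.
Proof. induction l1; simpl; [ring| rewrite IHl1; ring]. Qed.

Lemma sumR_plus l f h : sumR l (fun n => f n + h n) = sumR l f + sumR l h.
Proof. induction l; simpl; [ring| rewrite IHl; ring]. Qed.

Lemma sumR_scal l f c : sumR l (fun n => c * f n) = c * sumR l f.
Proof. induction l; simpl; [ring| rewrite IHl; ring]. Qed.

Lemma sumR_le l f h : (forall n, In n l -> f n <= h n) -> sumR l f <= sumR l h.
Proof. induction l; simpl; intros H; [lra|].
  pose proof (H a (or_introl eq_refl)). pose proof (IHl (fun n Hn => H n (or_intror Hn))). lra. Qed.

Lemma sumR_nonneg l f : (forall n, 0 <= f n) -> 0 <= sumR l f.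
Proof. intros H; induction l; simpl; [lra|]. pose proof (H a); lra. Qed.

Lemma sumR_filter l P f : sumR (filter P l) f = sumR l (fun n => if P n then f n else 0).
Proof. induction l; simpl; [auto|]. destruct (P a); simpl; rewrite IHl; ring. Qed.

Lemma length_sumR l P : INR (length (filter P l)) = sumR l (fun n => if P n then 1 else 0).
Proof. induction l; [simpl; auto|]. cbn [filter sumR fold_right]. destruct (P a).
  - cbn [length]. rewrite S_INR, IHl. unfold sumR; simpl; ring.
  - rewrite IHl. unfold sumR; simpl; ring. Qed.

Lemma sumR_zero l f : (forall n, In n l -> f n = 0) -> sumR l f = 0.
Proof. induction l; simpl; intros H; auto. rewrite H, IHl by auto; ring. Qed.

Lemma sumR_swap l1 l2 (F : nat -> nat -> R) :
  sumR l1 (fun n => sumR l2 (fun j => F n j)) = sumR l2 (fun j => sumR l1 (fun n => F n j)).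
Proof. induction l1; simpl.
  - symmetry; apply sumR_zero; auto.
  - rewrite IHl1. rewrite <- sumR_plus. reflexivity. Qed.

Lemma filter_all {A} (P : A -> bool) l : (forall x, In x l -> P x = true) -> filter P l = l.
Proof. induction l; simpl; intros H; auto. rewrite H by auto. rewrite IHl; auto. Qed.


Lemma sumR_delta L v c : (v < L)%nat ->
  sumR (seq 0 L) (fun j => if Nat.eqb v j then c else 0) = c.
Proof. intros H. replace L with (v + (1 + (L - v - 1)))%nat by lia.
  rewrite seq_app, sumR_app, seq_app, sumR_app. simpl.
  rewrite Nat.eqb_refl. rewrite !sumR_zero. ring.
  - intros n Hn; apply in_seq in Hn. destruct (Nat.eqb_spec v n); [lia|auto].
  - intros n Hn; apply in_seq in Hn. destruct (Nat.eqb_spec v n); [lia|auto]. Qed.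

Lemma sumR_sub_filter (Q : nat -> bool) (P : nat -> bool) f L1 s N :
  (forall n, 0 <= f n) ->
  (forall n, Q n = true -> P n = true /\ (s <= n < s + N)%nat) ->
  sumR (seq 0 L1) (fun n => if Q n then f n else 0) <= sumR (filter P (seq s N)) f.
Proof.
  intros Hf HQ. set (h := fun n => if Q n then f n else 0).
  assert (Hh : forall n, 0 <= h n) by (intros n; unfold h; destruct (Q n); [apply Hf|lra]).
  assert (E : forall a k, (a >= s + N)%nat -> sumR (seq a k) h = 0).
  { intros a k Ha. apply sumR_zero. intros n Hn; apply in_seq in Hn. unfold h.
    destruct (Q n) eqn:EQ; auto. apply HQ in EQ; lia. }
  assert (E0 : sumR (seq 0 s) h = 0).
  { apply sumR_zero. intros n Hn; apply in_seq in Hn. unfold h.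
    destruct (Q n) eqn:EQ; auto. apply HQ in EQ; lia. }
  assert (Hs : sumR (seq s N) h <= sumR (filter P (seq s N)) f).
  { rewrite sumR_filter. apply sumR_le. intros n _. unfold h.
    destruct (Q n) eqn:EQ. apply HQ in EQ. destruct EQ as [-> _]. lra.
    destruct (P n); [apply Hf|lra]. }
  destruct (le_lt_dec L1 (s + N)).
  -
    assert (sumR (seq 0 (s + N)) h = sumR (seq 0 s) h + sumR (seq s N) h).
    { replace (seq 0 (s+N)) with (seq 0 s ++ seq s N) by (rewrite seq_app; auto). apply sumR_app. }
    assert (sumR (seq 0 (s + N)) h = sumR (seq 0 L1) h + sumR (seq L1 (s+N-L1)) h).
    { replace (s + N)%nat with (L1 + (s + N - L1))%nat at 1 by lia. rewrite seq_app. apply sumR_app. }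
    pose proof (sumR_nonneg (seq L1 (s+N-L1)) h Hh). fold h. lra.
  - replace L1 with (s + N + (L1 - s - N))%nat by lia.
    rewrite seq_app, sumR_app. fold h. rewrite (E (0 + (s+N))%nat) by lia.
    replace (seq 0 (s+N)) with (seq 0 s ++ seq s N) by (rewrite seq_app; auto).
    rewrite sumR_app, E0. lra.
Qed.

Lemma count_small N s : 0 <= s ->
  sumR (seq 0 N) (fun n => if Rle_dec (INR n) s then 1 else 0) <= s + 1.
Proof. intros Hs.
  assert (H : forall N, sumR (seq 0 N) (fun n => if Rle_dec (INR n) s then 1 else 0) <= INR N /\
     sumR (seq 0 N) (fun n => if Rle_dec (INR n) s then 1 else 0) <= s + 1).
  { induction N0. simpl; lra.
    rewrite seq_S, sumR_app. rewrite S_INR. destruct IHN0.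
    assert (Hx : forall f a, sumR (a :: nil) f = f a) by (intros; unfold sumR; simpl; ring).
    rewrite Hx. simpl Nat.add.
    destruct (Rle_dec (INR N0) s); lra. }
  apply H. Qed.

Lemma up_facts y : 0 <= y ->
  (1 <= Z.to_nat (up y))%nat /\ y < INR (Z.to_nat (up y)) /\ INR (Z.to_nat (up y)) <= y + 1.
Proof. intros Hy. destruct (archimed y) as [H1 H2].
  assert (Hz : (0 < up y)%Z). { apply lt_IZR. lra. }
  rewrite INR_IZR_INZ, Z2Nat.id by lia. split; [lia| lra]. Qed.

Lemma nats_le_seq y : 0 <= y -> nats_le y = seq 0 (Z.to_nat (up y)).
Proof. intros Hy. destruct (up_facts y Hy) as [H1 [H2 H3]]. unfold nats_le.
  apply filter_all. intros k Hk. apply in_seq in Hk.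
  destruct (Rle_dec (INR k) y); auto. exfalso. apply n.
  assert (INR k <= INR (Z.to_nat (up y)) - 1).
  { replace (INR (Z.to_nat (up y)) - 1) with (INR (Z.to_nat (up y) - 1)).
    apply le_INR; lia. rewrite minus_INR by lia. simpl; ring. }
  lra. Qed.

Lemma up_INR m : Z.to_nat (up (INR m)) = S m.
Proof. destruct (up_facts (INR m) (pos_INR m)) as [H1 [H2 H3]].
  assert (m < Z.to_nat (up (INR m)))%nat by (apply INR_lt; auto).
  assert (Z.to_nat (up (INR m)) < S (S m))%nat. { apply INR_lt. rewrite !S_INR. lra. } lia. Qed.

Lemma nats_le_INR m : nats_le (INR m) = seq 0 (S m).
Proof. rewrite nats_le_seq by apply pos_INR. rewrite up_INR; auto. Qed.

Definition flo (y : R) : nat := pred (Z.to_nat (up y)).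

Lemma flo_facts y : 0 <= y -> INR (flo y) <= y < INR (flo y) + 1 /\ nats_le y = nats_le (INR (flo y)).
Proof. intros Hy. destruct (up_facts y Hy) as [H1 [H2 H3]]. unfold flo.
  rewrite nats_le_INR, nats_le_seq by auto.
  replace (S (pred (Z.to_nat (up y)))) with (Z.to_nat (up y)) by lia.
  rewrite <- (Nat.succ_pred (Z.to_nat (up y))) in H2, H3 by lia. rewrite S_INR in *. split; [lra|auto]. Qed.

Lemma cong_m1 n p : (1 <= n)%nat -> congb p (n - 1) n = congb (S p) 0 n.
Proof. intros Hn. unfold congb. rewrite Nat.Div0.mod_0_l.
  rewrite (Nat.mod_small (n-1)) by lia.
  pose proof (Nat.mod_upper_bound p n ltac:(lia)).
  pose proof (Nat.div_mod p n ltac:(lia)).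
  destruct (Nat.eqb_spec (p mod n) (n-1)) as [e1|e1]; destruct (Nat.eqb_spec (S p mod n) 0) as [e|e]; auto; exfalso.
  - apply e. apply Nat.Div0.mod_divides. exists (S (p / n)). lia.
  - apply e1. apply Nat.Div0.mod_divides in e. destruct e as [c Hc].
    assert (p mod n = n - 1)%nat.
    { symmetry. apply (Nat.mod_unique p n (c - 1)); try lia. destruct c; [lia|].
      rewrite Nat.mul_succ_r in Hc. replace (S c - 1)%nat with c by lia. lia. }
    auto.
Qed.

Definition P1b (n q : nat) : bool := primeb q && congb q 1 n.
Definition P2b (n q : nat) : bool := primeb q && congb (S q) 0 n.

Definition Dn (n m : nat) : R :=
  INR (pi_ap (INR m) n 1) - INR (pi_ap (INR m) n (n - 1)).
Definition Gn (n m : nat) : R := gx n (INR m).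

Definition indb (b : bool) : R := if b then 1 else 0.

Lemma sumR_single f a : sumR (a :: nil) f = f a.
Proof. unfold sumR; simpl; ring. Qed.

Lemma Dn_step n m : (1 <= n)%nat ->
  Dn n (S m) - Dn n m = indb (P1b n (S m)) - indb (P2b n (S m)).
Proof. intros Hn. unfold Dn, pi_ap. rewrite !nats_le_INR.
  rewrite (seq_S (S m)), !filter_app, !length_app. simpl.
  rewrite !plus_INR. unfold indb, P1b, P2b. rewrite cong_m1 by auto.
  destruct (primeb (S m) && congb (S m) 1 n); destruct (primeb (S m) && congb (S (S m)) 0 n); simpl; ring. Qed.

Lemma Gn_step n m : (1 <= n)%nat ->
  Gn n (S m) - Gn n m = (Dn n (S m) - Dn n m) / INR (S m).
Proof. intros Hn. rewrite Dn_step by auto. unfold Gn, gx. rewrite !nats_le_INR.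
  rewrite !sumR_filter. rewrite (seq_S (S m)), !sumR_app, !sumR_single.
  unfold indb, P1b, P2b. replace (0 + S m)%nat with (S m) by lia.
  assert (INR (S m) <> 0) by (apply not_0_INR; lia).
  destruct (primeb (S m) && congb (S m) 1 n); destruct (primeb (S m) && congb (S (S m)) 0 n);
  field; auto. Qed.

Fixpoint fsum (f : nat -> R) (k : nat) : R :=
  match k with O => 0 | S k' => fsum f k' + f k' end.

Lemma abel (D G : nat -> R) (a : nat) :
  (forall m, G (S m) - G m = (D (S m) - D m) / INR (S m)) ->
  forall k, G (a + k)%nat - G a =
    D (a + k)%nat / (INR (a + k) + 1) - D a / (INR a + 1)
    + fsum (fun i => D (a + i + 1)%nat / ((INR (a + i) + 1) * (INR (a + i) + 2))) k.
Proof. intros HG k. induction k.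
  - simpl. rewrite Nat.add_0_r. assert (INR a + 1 <> 0) by (pose proof (pos_INR a); lra). field; auto.
  - simpl fsum. replace (a + S k)%nat with (S (a + k)) by lia.
    replace (a + k + 1)%nat with (S (a + k)) by lia.
    pose proof (HG (a + k)%nat) as H. rewrite S_INR in *.
    set (r := INR (a + k)) in *. assert (0 <= r) by apply pos_INR.
    assert (Hsp : G (S (a + k)) - G a = (G (S (a + k)) - G (a + k)%nat) + (G (a + k)%nat - G a)) by ring.
    rewrite Hsp, H, IHk. pose proof (pos_INR a). field. lra. Qed.

Lemma fsum_abs_le f h k : (forall i, Rabs (f i) <= h i) -> Rabs (fsum f k) <= fsum h k.
Proof. intros H. induction k; simpl. rewrite Rabs_R0; lra.
  pose proof (Rabs_triang (fsum f k) (f k)). pose proof (H k). lra. Qed.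

Lemma fsum_le f h k : (forall i, f i <= h i) -> fsum f k <= fsum h k.
Proof. intros H. induction k; simpl. lra. pose proof (H k). lra. Qed.

Lemma fsum_tele (c : nat -> R) k : fsum (fun i => c i - c (S i)) k = c O - c k.
Proof. induction k; simpl. ring. rewrite IHk; ring. Qed.

Lemma ln_le_xm1 y : 0 < y -> ln y <= y - 1.
Proof. intros Hy. pose proof (exp_ineq1_le (ln y)). rewrite exp_ln in H by auto. lra. Qed.

Lemma ln_ge1 y : 3 <= y -> 1 <= ln y.
Proof. intros Hy. rewrite <- (ln_exp 1). apply ln_le. apply exp_pos. pose proof exp_le_3. lra. Qed.

Lemma ln_diff M : 0 < M -> / (M + 1) <= ln (M + 1) - ln M.
Proof. intros HM. pose proof (ln_le_xm1 (M / (M+1)) ltac:(apply Rdiv_lt_0_compat; lra)).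
  rewrite ln_div in H by lra.
  replace (M / (M + 1) - 1) with (- / (M+1)) in H by (field; lra). lra. Qed.

Lemma key_term M : 2 <= M ->
  / ((M + 1) * (ln (M + 1))^2) <= / ln M - / ln (M + 1).
Proof. intros HM.
  assert (h1 : 0 < ln M). { rewrite <- ln_1. apply ln_increasing; lra. }
  assert (h2 : ln M <= ln (M+1)) by (apply ln_le; lra).
  pose proof (ln_diff M ltac:(lra)) as h3.
  replace (/ ln M - / ln (M + 1)) with ((ln (M+1) - ln M) / (ln M * ln (M+1))) by (field; lra).
  apply Rle_trans with (/ (M+1) / (ln M * ln (M+1))).
  - unfold Rdiv. rewrite <- Rinv_mult. apply Rinv_le_contravar.
    apply Rmult_lt_0_compat; [lra|]. apply Rmult_lt_0_compat; lra.
    replace ((M+1) * ln (M+1)^2) with ((M+1) * (ln (M+1) * ln (M+1))) by ring.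
    apply Rmult_le_compat_l; [lra|]. apply Rmult_le_compat_r; lra.
  - unfold Rdiv. apply Rmult_le_compat_r; [|lra].
    left; apply Rinv_0_lt_compat, Rmult_lt_0_compat; lra. Qed.

Lemma abel_bound (D G : nat -> R) (a : nat) (eta : R) :
  (forall m, G (S m) - G m = (D (S m) - D m) / INR (S m)) ->
  (2 <= a)%nat -> 0 <= eta ->
  (forall m, (a <= m)%nat -> Rabs (D m) <= eta * INR m / (ln (INR m + 1))^2) ->
  forall k, Rabs (G (a + k)%nat - G a) <= 3 * eta.
Proof. intros HG Ha Heta HD k. rewrite (abel D G a HG k).
  assert (Hb : forall m, (a <= m)%nat -> Rabs (D m) / (INR m + 1) <= eta).
  { intros m Hm. pose proof (HD m Hm). assert (2 <= INR m) by (change 2 with (INR 2); apply le_INR; lia).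
    pose proof (ln_ge1 (INR m + 1) ltac:(lra)).
    set (L := ln (INR m + 1) ^ 2) in *. assert (1 <= L) by (unfold L; nra).
    set (u := / L) in *. assert (0 < u <= 1). { unfold u; split. apply Rinv_0_lt_compat; lra.
      rewrite <- Rinv_1. apply Rinv_le_contravar; lra. }
    set (v := / (INR m + 1)). assert (Hv : v * (INR m + 1) = 1) by (unfold v; field; lra).
    assert (0 < v) by (unfold v; apply Rinv_0_lt_compat; lra).
    unfold Rdiv in *. fold v. fold u in H.
    assert (Rabs (D m) * v <= eta * INR m * u * v) by (apply Rmult_le_compat_r; lra).
    assert (eta * INR m * u * v <= eta * INR m * v).
    { apply Rmult_le_compat_r; [lra|]. rewrite <- (Rmult_1_r (eta * INR m)) at 2.
      apply Rmult_le_compat_l; [nra|lra]. }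
    nra. }
  assert (Hs : Rabs (fsum (fun i => D (a + i + 1)%nat / ((INR (a + i) + 1) * (INR (a + i) + 2))) k) <= eta).
  { eapply Rle_trans. apply fsum_abs_le with (h := fun i => eta * (/ ln (INR (a + i + 1)) - / ln (INR (a + S i + 1)))).
    - intros i.
      assert (E1 : INR (a + i + 1) = INR (a + i) + 1) by (rewrite plus_INR; simpl; ring).
      assert (E2 : INR (a + S i + 1) = INR (a + i) + 2) by (rewrite !plus_INR, S_INR; simpl; ring).
      pose proof (HD (a + i + 1)%nat ltac:(lia)) as Hd. rewrite E1 in Hd. rewrite E1, E2.
      assert (Hr : 2 <= INR (a + i)) by (change 2 with (INR 2); apply le_INR; lia).
      set (r := INR (a + i)) in *.
      pose proof (key_term (r+1) ltac:(lra)). replace (r + 1 + 1) with (r + 2) in H by ring.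
      pose proof (ln_ge1 (r+2) ltac:(lra)).
      rewrite Rabs_div by nra. rewrite (Rabs_right ((r + 1) * (r + 2))) by nra.
      apply Rle_trans with (eta * (r+1) / ln (r + 1 + 1) ^ 2 / ((r + 1) * (r + 2))).
      + unfold Rdiv at 1 3. apply Rmult_le_compat_r; [left; apply Rinv_0_lt_compat; nra| auto].
      + replace (r + 1 + 1) with (r + 2) by ring.
        replace (eta * (r + 1) / ln (r + 2) ^ 2 / ((r + 1) * (r + 2))) with (eta * / ((r + 2) * ln (r + 2) ^ 2)).
        apply Rmult_le_compat_l; auto. field. split; nra.
    - set (c := fun i => eta * / ln (INR (a + i + 1))).
      replace (fsum _ k) with (fsum (fun i => c i - c (S i)) k).
      2:{ clear. induction k; simpl; auto. rewrite IHk. unfold c; ring. }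
      rewrite fsum_tele. unfold c.
      assert (H3 : 3 <= INR (a + 0 + 1)) by (replace 3 with (INR 3) by (simpl; lra); apply le_INR; lia).
      assert (H3' : 3 <= INR (a + k + 1)) by (replace 3 with (INR 3) by (simpl; lra); apply le_INR; lia).
      pose proof (ln_ge1 _ H3). pose proof (ln_ge1 _ H3').
      assert (0 < / ln (INR (a + 0 + 1)) <= 1). { split. apply Rinv_0_lt_compat; lra.
        rewrite <- Rinv_1. apply Rinv_le_contravar; lra. }
      assert (0 < / ln (INR (a + k + 1))) by (apply Rinv_0_lt_compat; lra).
      nra. }
  pose proof (Hb (a + k)%nat ltac:(lia)) as B1. pose proof (Hb a ltac:(lia)) as B2.
  pose proof (pos_INR a). pose proof (pos_INR (a+k)).
  rewrite <- (Rabs_right (INR a + 1)) in B2 by lra. rewrite <- Rabs_div in B2 by lra.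
  rewrite <- (Rabs_right (INR (a + k) + 1)) in B1 by lra. rewrite <- Rabs_div in B1 by lra.
  set (S1 := fsum _ k) in *.
  pose proof (Rabs_triang (D (a + k)%nat / (INR (a + k) + 1) - D a / (INR a + 1)) S1).
  pose proof (Rabs_triang (D (a + k)%nat / (INR (a + k) + 1)) (- (D a / (INR a + 1)))).
  rewrite Rabs_Ropp in H2. unfold Rminus in *. lra.
Qed.

Lemma lim_bound (G : nat -> R) a B : (forall k, Rabs (G (a+k)%nat - G a) <= B) ->
  Rabs (real (Lim_seq G) - G a) <= B.
Proof. intros H.
  assert (E : forall n, (a <= n)%nat -> Rabs (G n - G a) <= B).
  { intros n Hn. replace n with (a + (n - a))%nat by lia. apply H. }
  assert (L1 : Rbar_le (Lim_seq G) (Lim_seq (fun _ => G a + B))).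
  { apply Lim_seq_le_loc. exists a. intros n Hn. apply E in Hn. apply Rabs_le_between' in Hn. lra. }
  assert (L2 : Rbar_le (Lim_seq (fun _ => G a - B)) (Lim_seq G)).
  { apply Lim_seq_le_loc. exists a. intros n Hn. apply E in Hn. apply Rabs_le_between' in Hn. lra. }
  rewrite Lim_seq_const in L1, L2.
  destruct (Lim_seq G) as [l| |]; simpl in *; try contradiction.
  apply Rabs_le_between'. lra. Qed.

Lemma Rpower_ge_base x e : 1 <= x -> 1 <= e -> x <= Rpower x e.
Proof. intros Hx He. rewrite <- (Rpower_1 x) at 1 by lra. apply Rle_Rpower; lra. Qed.

Lemma exc_witness delta eps n : 0 < delta -> 0 < eps -> (2 <= n)%nat ->
  eps / INR n < Rabs (g n - gx n (Rpower (INR n) (1 + delta))) ->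
  exists m, Rpower (INR n) (1 + delta) < INR m + 1 /\
    eps / (4 * INR n) * INR m / (ln (INR m + 1))^2 < Rabs (Dn n m).
Proof. intros Hd He Hn Hexc. apply NNPP. intros Hno.
  set (T := Rpower (INR n) (1 + delta)) in *.
  assert (Hn2 : 2 <= INR n) by (replace 2 with (INR 2) by (simpl; lra); apply le_INR; lia).
  assert (HT : INR n <= T) by (apply Rpower_ge_base; lra).
  destruct (flo_facts T ltac:(lra)) as [[Ha1 Ha2] Hnl].
  set (a := flo T) in *.
  assert (Ha : (2 <= a)%nat). { assert (1 < INR a) by lra. replace 1 with (INR 1) in H by auto.
    apply INR_lt in H. lia. }
  assert (Hgx : gx n T = Gn n a) by (unfold gx, Gn; rewrite Hnl; auto).
  assert (Heta : 0 <= eps / (4 * INR n)) by (apply Rlt_le, Rdiv_lt_0_compat; lra).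
  pose proof (abel_bound (Dn n) (Gn n) a (eps / (4 * INR n)) (fun m => Gn_step n m ltac:(lia)) Ha Heta) as AB.
  assert (Hb : forall k, Rabs (Gn n (a + k)%nat - Gn n a) <= 3 * (eps / (4 * INR n))).
  { apply AB. intros m Hm. apply Rnot_lt_le. intros Hlt. apply Hno. exists m. split; auto.
    assert (INR a <= INR m) by (apply le_INR; auto). change (T < INR m + 1). lra. }
  pose proof (lim_bound (Gn n) a _ Hb) as LB.
  unfold g in Hexc. rewrite Hgx in Hexc. fold (Gn n) in Hexc.
  replace (Lim_seq (fun m => gx n (INR m))) with (Lim_seq (Gn n)) in Hexc by reflexivity.
  assert (3 * (eps / (4 * INR n)) < eps / INR n).
  { unfold Rdiv. rewrite Rinv_mult. assert (0 < / INR n) by (apply Rinv_0_lt_compat; lra). nra. }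
  lra. Qed.

Lemma thr_ineq eps x n m X : 0 < eps -> 1 <= n <= x -> 2 <= m -> X / 2 <= m -> m + 1 <= X ->
  eps * X / (8 * x * (ln X)^2) <= eps / (4 * n) * m / (ln (m+1))^2.
Proof. intros He Hn Hm H1 H2.
  assert (l1 : 1 <= ln (m+1)) by (apply ln_ge1; lra).
  assert (l2 : ln (m+1) <= ln X) by (apply ln_le; lra).
  assert (a1 : eps / (4 * x) <= eps / (4 * n)).
  { unfold Rdiv. apply Rmult_le_compat_l; [lra|]. apply Rinv_le_contravar; lra. }
  assert (a3 : / (ln X)^2 <= / (ln (m+1))^2).
  { apply Rinv_le_contravar. nra. nra. }
  replace (eps * X / (8 * x * (ln X)^2)) with (eps / (4 * x) * (X / 2) * / (ln X)^2)
    by (field; split; nra).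
  unfold Rdiv at 3. apply Rmult_le_compat; try nra.
  - apply Rmult_le_pos. apply Rmult_le_pos; [lra|]. left; apply Rinv_0_lt_compat; lra. lra.
  - left; apply Rinv_0_lt_compat; nra.
  - apply Rmult_le_compat; try lra. apply Rmult_le_pos; [lra|]. left; apply Rinv_0_lt_compat; lra.
Qed.

Lemma growth C : 0 <= C -> exists x1, forall x, x1 <= x -> 4 <= x /\ Rpower (ln x) C <= sqrt x / 2.
Proof. intros HC. exists (Rmax 4 (exp (64 * C^2 + 4))). intros x Hx.
  pose proof (Rmax_l 4 (exp (64 * C^2 + 4))). pose proof (Rmax_r 4 (exp (64 * C^2 + 4))).
  split; [lra|].
  assert (Hy : 64 * C^2 + 4 <= ln x).
  { rewrite <- (ln_exp (64 * C^2 + 4)). apply ln_le; [apply exp_pos| lra]. }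
  set (y := ln x) in *. assert (0 <= C^2) by nra. assert (Hy0 : 4 <= y) by lra.
  assert (Hsy : 8 * C <= sqrt y).
  { rewrite <- (sqrt_square (8 * C)) by lra. apply sqrt_le_1_alt. unfold Rsqr. nra. }
  assert (Hly : ln y <= 2 * sqrt y).
  { rewrite <- (sqrt_sqrt y) at 1 by lra. rewrite ln_mult by (apply sqrt_lt_R0; lra).
    pose proof (ln_le_xm1 (sqrt y) ltac:(apply sqrt_lt_R0; lra)). lra. }
  assert (Hl2 : ln 2 <= 1) by (pose proof (ln_le_xm1 2 ltac:(lra)); lra).
  assert (Hyy : sqrt y * sqrt y = y) by (apply sqrt_sqrt; lra).
  assert (Key : C * ln y + ln 2 <= y / 2) by nra.
  rewrite <- Rpower_sqrt by lra. unfold Rpower.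
  replace (exp (/ 2 * ln x)) with (exp (C * ln y + ln 2) * (exp (/2 * ln x - (C * ln y + ln 2)))).
  2:{ rewrite <- exp_plus. f_equal. ring. }
  rewrite exp_plus, exp_ln by lra.
  assert (1 <= exp (/ 2 * ln x - (C * ln y + ln 2))).
  { rewrite <- exp_0. fold y. assert (Hk : 0 <= / 2 * y - (C * ln y + ln 2)) by lra.
    destruct (Rle_lt_or_eq_dec _ _ Hk) as [E|E].
    left; apply exp_increasing; auto. rewrite <- E; lra. }
  pose proof (exp_pos (C * ln y)). nra.
Qed.

Lemma gcd1 k : Nat.gcd 1 k = 1%nat.
Proof. apply Nat.divide_1_r. apply Nat.gcd_divide_l. Qed.

Lemma gcd_pred k : Nat.gcd (match k with O => 1%nat | S k' => k' end) k = 1%nat.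
Proof. destruct k. reflexivity. change (S k) with (1 + k)%nat. rewrite Nat.gcd_add_diag_r.
  rewrite Nat.gcd_comm. apply gcd1. Qed.

Lemma tsum L : sumR (seq 0 L) (fun j => if Nat.eqb j 0 then 0 else / INR j - / INR (S j)) <= 1.
Proof.
  assert (H : forall L, sumR (seq 0 (S L)) (fun j => if Nat.eqb j 0 then 0 else / INR j - / INR (S j)) = 1 - / INR (S L)).
  { induction L0. simpl. unfold sumR; simpl. field.
    rewrite seq_S, sumR_app, sumR_single, IHL0. simpl Nat.add. simpl Nat.eqb. cbv iota. ring. }
  destruct L. simpl; lra. rewrite H. pose proof (pos_INR (S L)).
  assert (0 < / INR (S L)) by (apply Rinv_0_lt_compat; rewrite S_INR; pose proof (pos_INR L); lra). lra. Qed.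

Lemma ln_sqrt' x : 0 < x -> ln (sqrt x) = ln x / 2.
Proof. intros Hx. rewrite <- (sqrt_sqrt x) at 2 by lra. rewrite ln_mult by (apply sqrt_lt_R0; lra). field. Qed.

Lemma bj_bound C x j : 0 <= C -> 4 <= x -> sqrt x < 2 ^ (S j) ->
  / (Rpower (ln (2 ^ S j)) C * (ln (2 ^ S j))^2) <=
  (/ INR j - / INR (S j)) / (Rpower (/2) C * Rpower (ln x) C * (ln 2)^2) /\ (j <> 0)%nat.
Proof. intros HC Hx HX.
  assert (Hs2 : 2 <= sqrt x). { rewrite <- (sqrt_square 2) by lra. apply sqrt_le_1_alt. unfold Rsqr; lra. }
  assert (Hj : (j <> 0)%nat) by (intros ->; simpl in HX; lra). split; auto.
  assert (Hl2 : 0 < ln 2) by (rewrite <- ln_1; apply ln_increasing; lra).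
  assert (Hlx : 0 < ln x) by (rewrite <- ln_1; apply ln_increasing; lra).
  rewrite ln_pow by lra.
  assert (Hjr : 1 <= INR j) by (replace 1 with (INR 1) by auto; apply le_INR; lia).
  rewrite S_INR.
  assert (HlX : ln x / 2 <= (INR j + 1) * ln 2).
  { rewrite <- ln_sqrt' by lra. rewrite <- S_INR, <- ln_pow by lra. left; apply ln_increasing; lra. }
  assert (HR : Rpower (/2) C * Rpower (ln x) C <= Rpower ((INR j + 1) * ln 2) C).
  { rewrite Rmult_comm, Rpower_mult_distr by lra. apply Rle_Rpower_l; auto. lra. }
  assert (Hp1 : 0 < Rpower (/2) C * Rpower (ln x) C) by (apply Rmult_lt_0_compat; apply exp_pos).
  set (R1 := Rpower (/ 2) C * Rpower (ln x) C) in *.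
  set (R2 := Rpower ((INR j + 1) * ln 2) C) in *.
  replace ((/ INR j - / (INR j + 1)) / (R1 * ln 2 ^ 2)) with (/ (R1 * (INR j * (INR j + 1)) * ln 2 ^2))
    by (field; repeat split; lra).
  apply Rinv_le_contravar. apply Rmult_lt_0_compat. apply Rmult_lt_0_compat. auto. nra. nra.
  replace (((INR j + 1) * ln 2) ^ 2) with ((INR j + 1) * (INR j + 1) * ln 2 ^ 2) by ring.
  assert (0 < ln 2 ^ 2) by nra.
  assert (R1 * (INR j * (INR j + 1)) <= R2 * ((INR j+1)*(INR j+1))) by (apply Rmult_le_compat; nra).
  nra.
Qed.

Definition excb (delta eps : R) (n : nat) : bool :=
  Nat.ltb 0 n && (if Rlt_dec (eps / INR n) (Rabs (g n - gx n (Rpower (INR n) (1 + delta)))) then true else false).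
Definition witP (delta eps : R) (n m : nat) : Prop :=
  Rpower (INR n) (1 + delta) < INR m + 1 /\
  eps / (4 * INR n) * INR m / (ln (INR m + 1))^2 < Rabs (Dn n m).
Definition W (delta eps : R) (n : nat) : nat := epsilon (inhabits 0%nat) (witP delta eps n).
Definition bigb (x : R) (n : nat) : bool := if Rlt_dec (sqrt x) (INR n) then true else false.
Definition cbj delta eps x j n : bool :=
  bigb x n && excb delta eps n && Nat.eqb (Nat.log2 (W delta eps n)) j.

Lemma sqrt_ge2 x : 4 <= x -> 2 <= sqrt x.
Proof. intros Hx. rewrite <- (sqrt_square 2) by lra. apply sqrt_le_1_alt. unfold Rsqr; lra. Qed.

Lemma big_exc_props delta eps x n : 0 < delta -> 0 < eps -> 4 <= x ->
  bigb x n = true -> excb delta eps n = true ->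
  (2 <= n)%nat /\ sqrt x < INR n /\ witP delta eps n (W delta eps n) /\ (2 <= W delta eps n)%nat.
Proof. intros Hd He Hx Hb Hex. unfold bigb in Hb. destruct (Rlt_dec (sqrt x) (INR n)) as [Hs|]; [|discriminate].
  pose proof (sqrt_ge2 x Hx).
  assert (Hn : (2 <= n)%nat). { assert (1 < INR n) by lra. replace 1 with (INR 1) in H0 by auto.
    apply INR_lt in H0. lia. }
  unfold excb in Hex. apply andb_prop in Hex. destruct Hex as [_ Hex].
  destruct (Rlt_dec _ _) as [Hlt|]; [|discriminate].
  pose proof (exc_witness delta eps n Hd He Hn Hlt) as Hw.
  pose proof (epsilon_spec (inhabits 0%nat) (witP delta eps n) Hw) as HW. fold (W delta eps n) in HW.
  split; [auto|split;[auto|split;[auto|]]].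
  destruct HW as [HT _].
  assert (Hn2 : 2 <= INR n) by (replace 2 with (INR 2) by (simpl; lra); apply le_INR; lia).
  assert (INR n <= Rpower (INR n) (1 + delta)) by (apply Rpower_ge_base; lra).
  assert (1 < INR (W delta eps n)) by lra. replace 1 with (INR 1) in H1 by auto.
  apply INR_lt in H1. lia.
Qed.

Lemma cb_props delta eps x j n : 0 < delta -> 0 < eps -> 4 <= x ->
  cbj delta eps x j n = true ->
  (2 <= n)%nat /\ sqrt x < INR n /\ witP delta eps n (W delta eps n) /\ (2 <= W delta eps n)%nat /\
  (2 ^ j <= W delta eps n < 2 ^ S j)%nat.
Proof. intros Hd He Hx H. unfold cbj in H. apply andb_prop in H. destruct H as [H Hj].
  apply andb_prop in H. destruct H as [Hb Hex].
  destruct (big_exc_props delta eps x n Hd He Hx Hb Hex) as [A1 [A2 [A3 A4]]].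
  apply Nat.eqb_eq in Hj. subst j. pose proof (Nat.log2_spec (W delta eps n) ltac:(lia)).
  split;[auto|split;[auto|split;[auto|split;[auto|]]]]. lia.
Qed.

Lemma INR_pow2 k : INR (2 ^ k) = 2 ^ k.
Proof. rewrite pow_INR. auto. Qed.

Lemma in_nats_le n x : In n (nats_le x) -> INR n <= x.
Proof. unfold nats_le. intros H. apply filter_In in H. destruct H as [_ H].
  destruct (Rle_dec (INR n) x); [auto|discriminate]. Qed.

Lemma Rpower_inv_pow n d : 0 < n -> 0 < d -> Rpower (Rpower n (1 + d)) (/ (1 + d)) = n.
Proof. intros Hn Hd. rewrite Rpower_mult. replace ((1 + d) * / (1 + d)) with 1 by (field; lra).
  apply Rpower_1; auto. Qed.

Lemma cnt_bound delta eps C K x0 x j :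
  0 < delta -> 0 < eps -> 0 <= C -> 0 <= K -> 4 <= x -> x0 <= sqrt x ->
  (forall X, x0 <= X -> forall (lsel : nat -> nat) (ysel : nat -> R),
     (forall k, Nat.gcd (lsel k) k = 1%nat) -> (forall k, 2 <= ysel k <= X) ->
     sumR (filter (fun k => if Rlt_dec (INR k) (Rpower X (1 - (1 - / (1 + delta)))) then true else false)
        (seq 1 (Z.to_nat (up (Rpower X (1 - (1 - / (1 + delta))))))))
       (fun k => Rabs (INR (pi_ap (ysel k) k (lsel k)) - li (ysel k) / INR (phi k)))
     <= K * X / Rpower (ln X) (C + 4)) ->
  sumR (nats_le x) (fun n => indb (cbj delta eps x j n)) <=
  if Rlt_dec (sqrt x) (2 ^ S j) then 16 * K / eps * x / (Rpower (ln (2 ^ S j)) C * (ln (2 ^ S j))^2) else 0.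
Proof.
  intros Hd He HC HK Hx Hx0 HEH.
  assert (Hcb : forall n, In n (nats_le x) -> cbj delta eps x j n = true ->
     (2 <= n)%nat /\ sqrt x < INR n /\ INR n <= x /\ witP delta eps n (W delta eps n) /\
     2 <= INR (W delta eps n) /\ 2 ^ S j / 2 <= INR (W delta eps n) /\
     INR (W delta eps n) + 1 <= 2 ^ S j).
  { intros n Hin Hc. destruct (cb_props delta eps x j n Hd He Hx Hc) as [B1 [B2 [B3 [B4 [B5 B6]]]]].
    split; auto. split; auto. split. apply in_nats_le; auto. split; auto. split.
    replace 2 with (INR 2) by (simpl; lra). apply le_INR; auto.
    split. apply le_INR in B5. rewrite INR_pow2 in B5. simpl. lra.
    assert (W delta eps n + 1 <= 2 ^ S j)%nat by lia. apply le_INR in H.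
    rewrite plus_INR, INR_pow2 in H. simpl in H |- *. lra. }
  destruct (Rlt_dec (sqrt x) (2 ^ S j)) as [HX|HX].
  2:{ right. apply sumR_zero. intros n Hin. unfold indb.
      destruct (cbj delta eps x j n) eqn:E; auto. exfalso.
      destruct (Hcb n Hin E) as [B1 [B2 [B3 [[B4 _] [B5 [B6 B7]]]]]].
      assert (2 <= INR n) by (replace 2 with (INR 2) by (simpl; lra); apply le_INR; auto).
      assert (INR n <= Rpower (INR n) (1 + delta)) by (apply Rpower_ge_base; lra). lra. }
  set (X := 2 ^ S j) in *.
  destruct (bj_bound C x j HC Hx HX) as [_ Hj0].
  assert (HX4 : 4 <= X). { unfold X. destruct j; [lia|]. simpl.
    pose proof (pow_R1_Rle 2 j ltac:(lra)). lra. }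
  assert (HlX : 1 <= ln X) by (apply ln_ge1; lra).
  set (Q := cbj delta eps x j).
  set (ysel := fun k => if Q k then INR (W delta eps k) else 2).
  set (l2 := fun k : nat => match k with O => 1%nat | S k' => k' end).
  assert (Hys : forall k, 2 <= ysel k <= X).
  { intros k. unfold ysel. destruct (Q k) eqn:E; [|lra].
    assert (HNL : In k (nats_le x) \/ ~ In k (nats_le x)) by apply classic.
    destruct (cb_props delta eps x j k Hd He Hx E) as [B1 [B2 [B3 [B4 B5]]]].
    split. replace 2 with (INR 2) by (simpl; lra). apply le_INR; auto.
    assert (W delta eps k + 1 <= 2 ^ S j)%nat by lia. apply le_INR in H.
    rewrite plus_INR, INR_pow2 in H. simpl in H. unfold X. simpl. lra. }
  set (c := / (1 + delta)).
  set (PP := fun k : nat => if Rlt_dec (INR k) (Rpower X (1 - (1 - c))) then true else false).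
  set (NN := Z.to_nat (up (Rpower X (1 - (1 - c))))).
  set (E1 := fun k => Rabs (INR (pi_ap (ysel k) k 1) - li (ysel k) / INR (phi k))).
  set (E2 := fun k => Rabs (INR (pi_ap (ysel k) k (l2 k)) - li (ysel k) / INR (phi k))).
  pose proof (HEH X ltac:(lra) (fun _ => 1%nat) ysel (fun k => gcd1 k) Hys) as S1.
  pose proof (HEH X ltac:(lra) l2 ysel gcd_pred Hys) as S2.
  fold c PP NN in S1, S2. change (sumR (filter PP (seq 1 NN)) E1 <= K * X / Rpower (ln X) (C + 4)) in S1. fold E2 in S2.
  set (th := eps * X / (8 * x * (ln X)^2)).
  assert (Hth : 0 < th).
  { unfold th. apply Rdiv_lt_0_compat. nra. apply Rmult_lt_0_compat. lra. nra. }
  assert (Hmain : sumR (nats_le x) (fun n => indb (Q n)) * th <= sumR (filter PP (seq 1 NN)) (fun k => E1 k + E2 k)).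
  { rewrite Rmult_comm, <- sumR_scal.
    rewrite (nats_le_seq x) by lra.
    eapply Rle_trans.
    2:{ apply (sumR_sub_filter Q PP (fun k => E1 k + E2 k)).
        - intros n. unfold E1, E2. pose proof (Rabs_pos (INR (pi_ap (ysel n) n 1) - li (ysel n) / INR (phi n))).
          pose proof (Rabs_pos (INR (pi_ap (ysel n) n (l2 n)) - li (ysel n) / INR (phi n))). lra.
        - intros n Hq. destruct (cb_props delta eps x j n Hd He Hx Hq) as [B1 [B2 [[B3 _] [B4 B5]]]].
          assert (HPn : INR n < Rpower X (1 - (1 - c))).
          { replace (1 - (1 - c)) with c by ring.
            assert (INR (W delta eps n) + 1 <= X).
            { assert (W delta eps n + 1 <= 2 ^ S j)%nat by lia. apply le_INR in H.
              rewrite plus_INR, INR_pow2 in H. simpl in H. unfold X. simpl. lra. }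
            rewrite <- (Rpower_inv_pow (INR n) delta) by (try lra; replace 0 with (INR 0) by auto; apply lt_INR; lia).
            apply Rlt_Rpower_l. unfold c. apply Rinv_0_lt_compat; lra. split. apply exp_pos. lra. }
          split. unfold PP. destruct (Rlt_dec _ _); auto.
          assert (HR : 0 < Rpower X (1 - (1 - c))) by apply exp_pos.
          destruct (up_facts _ (Rlt_le _ _ HR)) as [_ [U1 _]]. fold NN in U1.
          assert (n < NN)%nat by (apply INR_lt; lra). lia. }
    apply sumR_le. intros n Hin. unfold indb. destruct (Q n) eqn:EQ; [|lra].
    rewrite <- (nats_le_seq x) in Hin by lra.
    destruct (Hcb n Hin EQ) as [B1 [B2 [B3 [[B4 B5] [B6 [B7 B8]]]]]].
    assert (Hn1 : 1 <= INR n) by (replace 1 with (INR 1) by auto; apply le_INR; lia).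
    pose proof (thr_ineq eps x (INR n) (INR (W delta eps n)) X He ltac:(lra) B6 B7 B8) as Ht.
    fold th in Ht.
    assert (HD : Rabs (Dn n (W delta eps n)) <= E1 n + E2 n).
    { unfold E1, E2, Dn, ysel. rewrite EQ.
      replace (l2 n) with (n - 1)%nat by (unfold l2; destruct n; lia).
      set (a1 := INR (pi_ap (INR (W delta eps n)) n 1)).
      set (a2 := INR (pi_ap (INR (W delta eps n)) n (n - 1))).
      set (L := li (INR (W delta eps n)) / INR (phi n)).
      replace (a1 - a2) with ((a1 - L) + - (a2 - L)) by ring.
      eapply Rle_trans. apply Rabs_triang. rewrite Rabs_Ropp. lra. }
    rewrite Rmult_1_r. lra. }
  rewrite sumR_plus in Hmain.
  assert (Hfin : sumR (nats_le x) (fun n => indb (Q n)) * th <= 2 * K * X / Rpower (ln X) (C + 4)) by lra.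
  assert (HP4 : Rpower (ln X) (C + 4) = Rpower (ln X) C * (ln X)^4).
  { rewrite Rpower_plus. replace 4 with (INR 4) by (simpl; lra). rewrite Rpower_pow by lra. auto. }
  rewrite HP4 in Hfin.
  assert (HPC : 0 < Rpower (ln X) C) by apply exp_pos.
  apply (Rmult_le_compat_r (/ th)) in Hfin; [|left; apply Rinv_0_lt_compat; lra].
  rewrite Rmult_assoc, Rinv_r, Rmult_1_r in Hfin by lra.
  eapply Rle_trans; [apply Hfin|]. right. unfold th. field. repeat split; nra.
Qed.

Fixpoint Wsum (f : nat -> nat) (l : list nat) : nat :=
  match l with nil => 0%nat | a :: l' => (f a + Wsum f l')%nat end.

Lemma Wsum_ge f l n : In n l -> (f n <= Wsum f l)%nat.
Proof. induction l; simpl; [tauto|]. intros [<-|H]; [lia|]. specialize (IHl H). lia. Qed.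

Theorem proposition2 (delta C : R) :
  0 < delta -> 3 <= C -> EH ->
  forall eps : R, 0 < eps ->
  exists K x0 : R, forall x : R, x0 <= x ->
    INR (exceptional_count delta eps x) <= K * x / Rpower (ln x) C.
Proof.
  intros Hd HC HEH eps He.
  assert (Hc : 0 < 1 - / (1 + delta)).
  { assert (/ (1 + delta) < 1). { rewrite <- Rinv_1. apply Rinv_lt_contravar; lra. } lra. }
  destruct (HEH (1 - / (1 + delta)) (C + 4) Hc ltac:(lra)) as [K [x0 HK]].
  set (K' := Rmax K 0). set (x0' := Rmax x0 0).
  assert (HK'0 : 0 <= K') by apply Rmax_r.
  assert (HK' : forall X, x0' <= X -> forall (lsel : nat -> nat) (ysel : nat -> R),
     (forall k, Nat.gcd (lsel k) k = 1%nat) -> (forall k, 2 <= ysel k <= X) ->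
     sumR (filter (fun k => if Rlt_dec (INR k) (Rpower X (1 - (1 - / (1 + delta)))) then true else false)
        (seq 1 (Z.to_nat (up (Rpower X (1 - (1 - / (1 + delta))))))))
       (fun k => Rabs (INR (pi_ap (ysel k) k (lsel k)) - li (ysel k) / INR (phi k)))
     <= K' * X / Rpower (ln X) (C + 4)).
  { intros X HX lsel ysel H1 H2. pose proof (Rmax_l x0 0). pose proof (Rmax_r x0 0).
    eapply Rle_trans. apply HK; auto. unfold x0' in *; lra.
    unfold Rdiv. apply Rmult_le_compat_r. left; apply Rinv_0_lt_compat, exp_pos.
    apply Rmult_le_compat_r. unfold x0' in *; lra. apply Rmax_l. }
  destruct (growth C ltac:(lra)) as [x1 Hx1].
  set (c2 := Rpower (/2) C).
  assert (Hc2 : 0 < c2) by apply exp_pos.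
  assert (Hl2 : 0 < ln 2) by (rewrite <- ln_1; apply ln_increasing; lra).
  set (Ks := 16 * K' / eps).
  exists (1 + Ks / (c2 * (ln 2)^2)), (Rmax x1 (x0' * x0')).
  intros x Hx.
  pose proof (Rmax_l x1 (x0' * x0')). pose proof (Rmax_r x1 (x0' * x0')).
  destruct (Hx1 x ltac:(lra)) as [Hx4 HP].
  set (P := Rpower (ln x) C) in *.
  assert (HP0 : 0 < P) by apply exp_pos.
  assert (Hsx : x0' <= sqrt x).
  { rewrite <- (sqrt_square x0') by apply Rmax_r. apply sqrt_le_1_alt. unfold Rsqr; lra. }
  assert (Hs2 := sqrt_ge2 x Hx4).
  unfold exceptional_count. rewrite length_sumR.
  change (fun n : nat => if Nat.ltb 0 n && (if Rlt_dec (eps / INR n) (Rabs (g n - gx n (Rpower (INR n) (1 + delta)))) then true else false) then 1 else 0)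
    with (fun n => indb (excb delta eps n)).
  set (NL := nats_le x).
  set (J1 := Wsum (W delta eps) NL).
  assert (Hpt : forall n, In n NL -> indb (excb delta eps n) <=
     (if Rle_dec (INR n) (sqrt x) then 1 else 0) + sumR (seq 0 (S J1)) (fun j => indb (cbj delta eps x j n))).
  { intros n Hin.
    assert (Hnn : 0 <= sumR (seq 0 (S J1)) (fun j => indb (cbj delta eps x j n))).
    { apply sumR_nonneg. intros j; unfold indb; destruct (cbj _ _ _ _ _); lra. }
    destruct (Rle_dec (INR n) (sqrt x)) as [Hle|Hle].
    - unfold indb at 1. destruct (excb delta eps n); lra.
    - destruct (excb delta eps n) eqn:E; [|unfold indb at 1; lra].
      assert (Hb : bigb x n = true) by (unfold bigb; destruct (Rlt_dec _ _) as [|Hn]; auto; apply Rnot_lt_le in Hn; apply Rnot_le_lt in Hle; lra).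
      unfold cbj. rewrite Hb, E. simpl andb.
      assert (Nat.log2 (W delta eps n) < S J1)%nat.
      { pose proof (Nat.log2_le_lin (W delta eps n) ltac:(lia)). pose proof (Wsum_ge (W delta eps) NL n Hin). fold J1 in H2. lia. }
      unfold indb at 2. rewrite (sumR_delta (S J1) (Nat.log2 (W delta eps n)) 1) by auto.
      unfold indb; lra. }
  eapply Rle_trans. apply sumR_le. apply Hpt.
  rewrite sumR_plus, sumR_swap.
  assert (Hsmall : sumR NL (fun n => if Rle_dec (INR n) (sqrt x) then 1 else 0) <= sqrt x + 1).
  { unfold NL. rewrite nats_le_seq by lra. apply count_small. lra. }
  assert (Hbig : sumR (seq 0 (S J1)) (fun j => sumR NL (fun n => indb (cbj delta eps x j n))) <=
     Ks * x / (c2 * P * (ln 2)^2)).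
  { eapply Rle_trans. apply sumR_le. intros j _.
    eapply Rle_trans. apply (cnt_bound delta eps C K' x0' x j Hd He ltac:(lra) HK'0 Hx4 Hsx HK').
    instantiate (1 := fun j => Ks * x / (c2 * P * (ln 2)^2) * (if Nat.eqb j 0 then 0 else / INR j - / INR (S j))).
    cbv beta. destruct (Rlt_dec (sqrt x) (2 ^ S j)) as [HX|HX].
    - destruct (bj_bound C x j ltac:(lra) Hx4 HX) as [B1 B2].
      destruct (Nat.eqb_spec j 0); [lia|]. fold c2 P in B1.
      assert (1 <= INR j) by (replace 1 with (INR 1) by auto; apply le_INR; lia).
      assert (INR (S j) <> 0) by (rewrite S_INR; lra).
      replace (16 * K' / eps * x / (Rpower (ln (2 ^ S j)) C * ln (2 ^ S j) ^ 2)) with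
        (Ks * x * / (Rpower (ln (2 ^ S j)) C * ln (2 ^ S j) ^ 2)) by (unfold Ks, Rdiv; ring).
      replace (Ks * x / (c2 * P * ln 2 ^ 2) * (/ INR j - / INR (S j))) with
        (Ks * x * ((/ INR j - / INR (S j)) / (c2 * P * ln 2 ^ 2))) by (field; repeat split; nra).
      apply Rmult_le_compat_l; auto. unfold Ks. apply Rmult_le_pos; [|lra].
      unfold Rdiv; apply Rmult_le_pos; [lra|left; apply Rinv_0_lt_compat; lra].
    - apply Rmult_le_pos. unfold Rdiv. apply Rmult_le_pos. apply Rmult_le_pos. unfold Ks, Rdiv.
      apply Rmult_le_pos; [lra|left; apply Rinv_0_lt_compat; lra]. lra.
      left; apply Rinv_0_lt_compat. apply Rmult_lt_0_compat. nra. nra.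
      destruct (Nat.eqb_spec j 0); [lra|].
      assert (1 <= INR j) by (replace 1 with (INR 1) by auto; apply le_INR; lia).
      rewrite S_INR. assert (/ (INR j + 1) <= / INR j) by (apply Rinv_le_contravar; lra). lra.
    - rewrite sumR_scal. pose proof (tsum (S J1)).
      assert (0 <= Ks * x / (c2 * P * ln 2 ^ 2)).
      { unfold Rdiv. apply Rmult_le_pos. apply Rmult_le_pos. unfold Ks, Rdiv.
        apply Rmult_le_pos; [lra|left; apply Rinv_0_lt_compat; lra]. lra.
        left; apply Rinv_0_lt_compat. apply Rmult_lt_0_compat. nra. nra. }
      nra. }
  assert (Hsq : sqrt x + 1 <= x / P).
  { assert (Hxx : sqrt x * sqrt x = x) by (apply sqrt_sqrt; lra).
    apply Rmult_le_reg_r with P; auto. unfold Rdiv. rewrite Rmult_assoc, Rinv_l, Rmult_1_r by lra.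
    nra. }
  assert (Ks * x / (c2 * P * ln 2 ^ 2) = Ks / (c2 * ln 2 ^ 2) * x / P) by (field; repeat split; nra).
  assert ((1 + Ks / (c2 * ln 2 ^ 2)) * x / P = x / P + Ks / (c2 * ln 2 ^ 2) * x / P) by (field; repeat split; nra).
  lra.
Qed.
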